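(* Let $\mathcal{C}$ be an idempotent Mal'cev clone on $\{0,1,2\}$ that contains a majority operation and preserves none of $\mu_0,\mu_1,\mu_2$ and $\varphi$. Then $\mathcal{C}\equiv_{\mathrm{m}}\mathcal{C}_2$ or $\mathcal{C}\equiv_{\mathrm{m}}\mathcal{I}_2$.
   Context: A clone is idempotent if $f(x,\dots,x)\approx x$ for all its operations; Mal'cev if it contains $d$ with $d(y,x,x)\approx d(x,x,y)\approx y$; a majority operation satisfies $m(x,y,y)\approx m(y,x,y)\approx m(y,y,x)\approx y$. $\mu_i$ is the equivalence relation on $\{0,1,2\}$ with classes $\{i\}$ and $\{0,1,2\}\setminus\{i\}$; $\varphi=\{(0,1),(1,2),(2,0)\}$. $\mathcal{C}_2=\mathrm{Pol}(\{0,1\};\neq,\{0\},\{1\})$ and $\mathcal{I}_2=\mathrm{Pol}(\{0,1\};\{0\},\{1\})$, where $\mathrm{Pol}(\Gamma)$ is the clone of operations preserving all relations of $\Gamma$. For an $n$-ary $f$ and $\sigma\colon[n]\to[r]$, $f_\sigma(x_1,\dots,x_r)=f(x_{\sigma(1)},\dots,x_{\sigma(n)})$; a minion homomorphism is an arity-preserving map $\xi$ between clones with $\xi(f_\sigma)=\xi(f)_\sigma$; $\mathcal{C}\equiv_{\mathrm{m}}\mathcal{D}$ means there are minion homomorphisms in both directions. *)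

(* Defs.v *)
From mathcomp Require Import all_boot.
Set Implicit Arguments. Unset Strict Implicit. Unset Printing Implicit Defensive.

Definition op (T : finType) (n : nat) := {ffun {ffun 'I_n -> T} -> T}.

Definition opset (T : finType) := forall n : nat, op T n -> Prop.

Definition proj_op (T : finType) (n : nat) (i : 'I_n) : op T n :=
  [ffun x : {ffun 'I_n -> T} => x i].
Definition comp_op (T : finType) (n m : nat) (f : op T n) (g : 'I_n -> op T m)
  : op T m := [ffun x : {ffun 'I_m -> T} => f [ffun i => g i x]].

Definition is_clone (T : finType) (C : opset T) : Prop :=
  (forall n (i : 'I_n), C n (proj_op T i)) /\
  (forall n m (f : op T n) (g : 'I_n -> op T m),
      C n f -> (forall i, C m (g i)) -> C m (comp_op f g)).

Definition minor (T : finType) (n r : nat) (sigma : 'I_n -> 'I_r) (f : op T n)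
  : op T r := [ffun x : {ffun 'I_r -> T} => f [ffun i => x (sigma i)]].

Definition minion_hom (T U : finType) (C : opset T) (D : opset U)
  (xi : forall n, op T n -> op U n) : Prop :=
  (forall n f, C n f -> D n (xi n f)) /\
  (forall n r (sigma : 'I_n -> 'I_r) (f : op T n),
      C n f -> xi r (minor sigma f) = minor sigma (xi n f)).

Definition minion_equiv (T U : finType) (C : opset T) (D : opset U) : Prop :=
  (exists xi, minion_hom C D xi) /\ (exists zeta, minion_hom D C zeta).

Definition relk (T : finType) (k : nat) := pred {ffun 'I_k -> T}.

Definition preserves (T : finType) (n k : nat) (f : op T n) (R : relk T k) : Prop :=
  forall r : 'I_n -> {ffun 'I_k -> T},
    (forall j, R (r j)) -> R [ffun l : 'I_k => f [ffun j => r j l]].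

Fixpoint Pol (T : finType) (Gamma : list {k : nat & relk T k}) : opset T :=
  fun n f => match Gamma with
             | nil => True
             | cons (existT k R) G => preserves f R /\ Pol G f
             end.

Definition rel1 (T : finType) (P : pred T) : relk T 1 :=
  fun t => P (t ord0).
Definition rel2 (T : finType) (R : rel T) : relk T 2 :=
  fun t => R (t ord0) (t ord_max).

Definition tri (T : finType) (a b c : T) : {ffun 'I_3 -> T} :=
  [ffun i : 'I_3 => if val i == 0 then a else if val i == 1 then b else c].

Definition idempotent_clone (T : finType) (C : opset T) : Prop :=
  forall n (f : op T n), C n f -> forall x : T, f [ffun _ => x] = x.

Definition has_malcev (T : finType) (C : opset T) : Prop :=
  exists d : op T 3, C 3 d /\
    forall x y : T, d (tri y x x) = y /\ d (tri x x y) = y.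

Definition has_majority (T : finType) (C : opset T) : Prop :=
  exists m : op T 3, C 3 m /\
    forall x y : T, [/\ m (tri x y y) = y, m (tri y x y) = y & m (tri y y x) = y].

Definition clone_preserves (T : finType) (C : opset T) (k : nat) (R : relk T k) : Prop :=
  forall n (f : op T n), C n f -> preserves f R.

Definition mu (i : nat) : relk 'I_3 2 :=
  rel2 (fun x y : 'I_3 => (val x == i) == (val y == i)).
Definition phi : relk 'I_3 2 :=
  rel2 (fun x y : 'I_3 => val y == (val x).+1 %% 3).

Definition neq2 : relk 'I_2 2 := rel2 (fun x y : 'I_2 => x != y).
Definition const2 (c : nat) : relk 'I_2 1 := rel1 (fun x : 'I_2 => val x == c).

Definition C2 : opset 'I_2 :=
  Pol [:: existT _ 2 neq2; existT _ 1 (const2 0); existT _ 1 (const2 1)].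
Definition I2 : opset 'I_2 :=
  Pol [:: existT _ 1 (const2 0); existT _ 1 (const2 1)].

(* Main.v *)
Require Import Defs.
From mathcomp Require Import all_boot boolp.
Set Implicit Arguments. Unset Strict Implicit. Unset Printing Implicit Defensive.

Notation A := 'I_3.
Definition o0 : A := @Ordinal 3 0 isT.
Definition o1 : A := @Ordinal 3 1 isT.
Definition o2 : A := @Ordinal 3 2 isT.

Lemma A_cases (a : A) : [\/ a = o0, a = o1 | a = o2].
Proof.
case: a => [[|[|[|m]]] Hm]; [constructor 1|constructor 2|constructor 3|by []];
  exact: val_inj.
Qed.

Lemma forall3 (P : A -> Prop) : P o0 -> P o1 -> P o2 -> forall a, P a.
Proof. by move=> H0 H1 H2 a; case: (A_cases a) => ->. Qed.

Definition third (p q : A) : A :=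
  if (p != o0) && (q != o0) then o0 else if (p != o1) && (q != o1) then o1 else o2.

Lemma third_neq p q : p != q -> (third p q != p) && (third p q != q).
Proof. by move: p q; apply: forall3; apply: forall3. Qed.

Lemma third_cases p q : p != q -> forall z, [|| z == p, z == q | z == third p q].
Proof. by move: p q; apply: forall3; apply: forall3 => // _; apply: forall3. Qed.

Definition elt (z : A) : A := if z == o0 then o1 else o0.
Lemma elt_neq z : elt z != z.
Proof. by move: z; apply: forall3. Qed.

Definition tau (s a : A) : A := if a == s then a else third s a.
Lemma tau_inv s a : tau s (tau s a) = a.
Proof. by move: s a; apply: forall3; apply: forall3. Qed.
Lemma tau_fix s a : tau s a = a -> a = s.
Proof. by move: s a; apply: forall3; apply: forall3. Qed.
Lemma tau_eq s a b : (tau s a == b) = (a == tau s b).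
Proof. by apply/eqP/eqP => [<-|->]; rewrite tau_inv. Qed.
Lemma tau_inj s : injective (tau s).
Proof. exact: can_inj (tau_inv s). Qed.

Notation B := 'I_2.
Definition z2 : B := @Ordinal 2 0 isT.
Definition u2 : B := @Ordinal 2 1 isT.
Definition b2o (b : bool) : B := if b then u2 else z2.
Lemma B_cases (b : B) : b = z2 \/ b = u2.
Proof. case: b => [[|[|m]] Hm]; [left|right|by []]; exact: val_inj. Qed.

Definition vec := {ffun (A * A)%type -> B}.
Definition E (a : A) : vec := [ffun ij => b2o ((ij.1 == a) || (ij.2 == a))].
Definition M (r : A) : vec := [ffun ij => b2o [&& ij.1 != ij.2, ij.1 != r & ij.2 != r]].
Definition J (r : A) : vec := [ffun ij => b2o (~~ ((ij.1 == r) && (ij.2 == r)))].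

Lemma E_inj a a' : E a = E a' -> a = a'.
Proof.
move/ffunP/(_ (a,a)); rewrite !ffunE /= eqxx /= orbb.
by case: eqP.
Qed.

Lemma EM a r : E a <> M r.
Proof. by move/ffunP/(_ (a,a)); rewrite !ffunE /= eqxx. Qed.

Lemma EJ a r : E a <> J r.
Proof.
move/ffunP=> H; have := H (r,r); rewrite !ffunE /= eqxx /= orbb.
case: eqP => // /eqP Hra _.
have /andP[H1 H2] := third_neq Hra.
by have := H (third r a, third r a); rewrite !ffunE /= orbb andbb (negbTE H1) (negbTE H2).
Qed.

Lemma MJ r r' : M r <> J r'.
Proof.
by move/ffunP/(_ (elt r', elt r')); rewrite !ffunE /= eqxx /= andbb (negbTE (elt_neq r')).
Qed.

Lemma M_inj r r' : M r = M r' -> r = r'.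
Proof.
case: (eqVneq r r') => // Hr /ffunP/(_ (r, third r r')).
have /andP[H1 H2] := third_neq Hr.
by rewrite !ffunE /= eqxx eq_sym H1 Hr H2.
Qed.

Lemma J_inj r r' : J r = J r' -> r = r'.
Proof.
case: (eqVneq r r') => // Hr /ffunP/(_ (r', r')).
by rewrite !ffunE /= eqxx eq_sym (negbTE Hr).
Qed.

Definition dec (L : A -> A) (c : A) (v : vec) : A :=
  if [pick a | E a == v] is Some a then a
  else if [pick r | (M r == v) || (J r == v)] is Some r then L r else c.

Lemma dec_E L c a : dec L c (E a) = a.
Proof.
rewrite /dec; case: pickP => [a' /eqP/E_inj //|/(_ a)]; by rewrite eqxx.
Qed.

Lemma dec_M L c r : dec L c (M r) = L r.
Proof.
rewrite /dec; case: pickP => [a' /eqP/EM //|_].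
case: pickP => [r' /orP[/eqP/M_inj ->//|/eqP/esym/MJ //]|/(_ r)].
by rewrite eqxx.
Qed.

Lemma dec_J L c r : dec L c (J r) = L r.
Proof.
rewrite /dec; case: pickP => [a' /eqP/EJ //|_].
case: pickP => [r' /orP[/eqP/MJ //|/eqP/J_inj ->//]|/(_ r)].
by rewrite eqxx orbT.
Qed.

Lemma dec_other L c v : (forall a, v <> E a) -> (forall r, v <> M r /\ v <> J r) ->
  dec L c v = c.
Proof.
move=> H1 H2; rewrite /dec; case: pickP => [a /eqP Ha|_]; first by case: (H1 a).
case: pickP => [r /orP[/eqP Hr|/eqP Hr]|//]; have [K1 K2] := H2 r; [by case: K1|by case: K2].
Qed.

Definition sel (p q : A) (s t : B) : vec :=
  [ffun j => if E p j == E q j then E p j else if E q j == u2 then s else t].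

Lemma sel_pq p q : p != q ->
  [/\ sel p q z2 u2 = E p, sel p q u2 z2 = E q, sel p q z2 z2 = M (third p q)
    & sel p q u2 u2 = J (third p q)].
Proof.
move: p q; apply: forall3; apply: forall3 => H; rewrite ?eqxx // in H;
 split; apply/ffunP => -[i k]; move: i k; apply: forall3; apply: forall3;
 by rewrite !ffunE.
Qed.

Definition perm (s : A) (v : vec) : vec := [ffun j => v (tau s j.1, tau s j.2)].
Lemma perm_E s a : perm s (E a) = E (tau s a).
Proof. by apply/ffunP => -[i k]; rewrite !ffunE /= !tau_eq. Qed.
Lemma perm_M s r : perm s (M r) = M (tau s r).
Proof. by apply/ffunP => -[i k]; rewrite !ffunE /= !tau_eq ?tau_inv. Qed.
Lemma perm_J s r : perm s (J r) = J (tau s r).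
Proof. by apply/ffunP => -[i k]; rewrite !ffunE /= !tau_eq. Qed.
Lemma perm_perm s v : perm s (perm s v) = v.
Proof. by apply/ffunP => -[i k]; rewrite !ffunE /= !tau_inv. Qed.

Lemma dec_perm L c s v : (forall r, L (tau s r) = tau s (L r)) -> tau s c = c ->
  dec L c (perm s v) = tau s (dec L c v).
Proof.
move=> HL Hc.
case: (pselect (exists a, v = E a)) => [[a ->]|Ha]; first by rewrite perm_E !dec_E.
case: (pselect (exists r, v = M r \/ v = J r)) => [[r [->|->]]|Hr].
- by rewrite perm_M !dec_M.
- by rewrite perm_J !dec_J.
rewrite (@dec_other L c v); last 2 first.
- by move=> a Hva; apply: Ha; exists a.
- by move=> r; split=> Hv; apply: Hr; exists r; [left|right].
rewrite dec_other // => [a Hva|r].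
- by apply: Ha; exists (tau s a); rewrite -perm_E -Hva perm_perm.
- split=> Hv; apply: Hr; exists (tau s r); [left|right];
  by rewrite -?perm_M -?perm_J -Hv perm_perm.
Qed.

Definition zeta (L : A -> A) (c : A) (n : nat) (h : op B n) : op A n :=
  [ffun x : {ffun 'I_n -> A} => dec L c [ffun j => h [ffun i => E (x i) j]]].

Lemma zeta_minor L c n r (sigma : 'I_n -> 'I_r) (h : op B n) :
  zeta L c (minor sigma h) = minor sigma (zeta L c h).
Proof.
apply/ffunP => x; rewrite !ffunE; congr dec; apply/ffunP => j; rewrite !ffunE.
by apply: congr1; apply/ffunP => i; rewrite !ffunE.
Qed.

Lemma zeta_perm L c n (h : op B n) s (x : {ffun 'I_n -> A}) :
  (forall r, L (tau s r) = tau s (L r)) -> tau s c = c ->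
  zeta L c h [ffun i => tau s (x i)] = tau s (zeta L c h x).
Proof.
move=> HL Hc; rewrite !ffunE -dec_perm //; congr dec; apply/ffunP => -[i k].
rewrite !ffunE /=; apply: congr1; apply/ffunP => l; by rewrite !ffunE /= !tau_eq.
Qed.

Definition idem2 n (h : op B n) := forall b, h [ffun _ => b] = b.
Definition sd n (h : op B n) := forall b : {ffun 'I_n -> bool},
  h [ffun i => b2o (b i)] != h [ffun i => b2o (~~ b i)].

Lemma zeta_two n (h : op B n) (x : {ffun 'I_n -> A}) p q : idem2 h -> p != q ->
  (forall i, (x i == p) || (x i == q)) ->
  [ffun j => h [ffun i => E (x i) j]] =
  sel p q (h [ffun i => b2o (x i == q)]) (h [ffun i => b2o (x i != q)]).
Proof.
move=> hh Hpq Hx; apply/ffunP => j; rewrite [LHS]ffunE /sel [RHS]ffunE.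
have HE : forall i, E (x i) j = if x i == q then E q j else E p j.
  by move=> i; case/orP: (Hx i) => /eqP ->; rewrite ?eqxx // (negbTE Hpq).
have -> : [ffun i => E (x i) j] = [ffun i => if x i == q then E q j else E p j].
  by apply/ffunP => i; rewrite [LHS]ffunE [RHS]ffunE HE.
move: (E p j) (E q j) => ep eq.
case: ifP => [/eqP Heq|Hne].
  rewrite -{2}(hh ep); apply: congr1; apply/ffunP => i; rewrite !ffunE.
  by case: ifP.
case: (B_cases ep) => Ep; case: (B_cases eq) => Eq;
  rewrite Ep Eq in Hne *; rewrite ?eqxx // in Hne; rewrite /=;
  apply: congr1; apply/ffunP => i; rewrite !ffunE;
  by case: (x i == q).
Qed.

Lemma tri_o0 (a b c : A) : tri a b c o0 = a. Proof. by rewrite ffunE. Qed.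
Lemma tri_o1 (a b c : A) : tri a b c o1 = b. Proof. by rewrite ffunE. Qed.
Lemma tri_o2 (a b c : A) : tri a b c o2 = c. Proof. by rewrite ffunE. Qed.

Section Clone.
Unset Implicit Arguments.
Variable C : opset A.
Set Implicit Arguments.
Hypothesis hC : is_clone C.
Hypothesis hid : idempotent_clone C.
Variable d : op A 3.
Hypothesis hd : C 3 d.
Hypothesis hdM : forall x y : A, d (tri y x x) = y /\ d (tri x x y) = y.
Variable m : op A 3.
Hypothesis hm : C 3 m.
Hypothesis hmM : forall x y : A,
  [/\ m (tri x y y) = y, m (tri y x y) = y & m (tri y y x) = y].

Definition Inv (R : rel A) := forall n (f : op A n), C n f ->
  forall x y : {ffun 'I_n -> A}, (forall i, R (x i) (y i)) -> R (f x) (f y).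
Definition Inv1 (U : pred A) := forall n (f : op A n), C n f ->
  forall x : {ffun 'I_n -> A}, (forall i, U (x i)) -> U (f x).

Lemma Inv_ext R R' : Inv R -> R =2 R' -> Inv R'.
Proof.
move=> HR E' n f Hf x y Hxy; rewrite -E'; apply: HR => // i; rewrite E'; exact: Hxy.
Qed.
Lemma Inv1_ext U U' : Inv1 U -> U =1 U' -> Inv1 U'.
Proof.
move=> HU E' n f Hf x Hx; rewrite -E'; apply: HU => // i; rewrite E'; exact: Hx.
Qed.

Lemma Inv_and R S : Inv R -> Inv S -> Inv [rel a b | R a b && S a b].
Proof.
move=> HR HS n f Hf x y Hxy /=; apply/andP; split; [apply: HR|apply: HS] => // i;
  by case/andP: (Hxy i).
Qed.

Lemma Inv_conv R : Inv R -> Inv [rel a b | R b a].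
Proof. by move=> HR n f Hf x y Hxy /=; apply: HR. Qed.

Lemma Inv_comp R S : Inv R -> Inv S -> Inv [rel a c | [exists b, R a b && S b c]].
Proof.
move=> HR HS n f Hf x z Hxz /=.
pose y := [ffun i => odflt (x i) [pick b | R (x i) b && S b (z i)]].
have Hy : forall i, R (x i) (y i) && S (y i) (z i).
  move=> i; rewrite ffunE; case: pickP => [b //|H].
  by case/existsP: (Hxz i) => b; rewrite H.
apply/existsP; exists (f y); apply/andP; split; [apply: HR|apply: HS] => // i;
  by case/andP: (Hy i).
Qed.

Lemma Inv_eq : Inv eq_op.
Proof.
move=> n f Hf x y Hxy; suff -> : x = y by [].
by apply/ffunP => i; apply/eqP.
Qed.

Lemma Inv1_diag U : Inv1 U -> Inv [rel a b | (a == b) && U a].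
Proof.
move=> HU n f Hf x y Hxy /=.
have -> : y = x by apply/ffunP => i; case/andP: (Hxy i) => /eqP ->.
rewrite eqxx /=; apply: HU => // i; by case/andP: (Hxy i).
Qed.

Lemma Inv1_pr1 R : Inv R -> Inv1 [pred a | [exists b, R a b]].
Proof.
move=> HR n f Hf x Hx /=.
pose y := [ffun i => odflt (x i) [pick b | R (x i) b]].
have Hy : forall i, R (x i) (y i).
  move=> i; rewrite ffunE; case: pickP => [b //|H].
  by case/existsP: (Hx i) => b; rewrite H.
by apply/existsP; exists (f y); apply: HR.
Qed.

Lemma Inv1_pr2 R : Inv R -> Inv1 [pred b | [exists a, R a b]].
Proof. by move/Inv_conv/Inv1_pr1. Qed.

Lemma Inv1_const a : Inv1 (pred1 a).
Proof.
move=> n f Hf x Hx; have -> : x = [ffun _ => a].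
  by apply/ffunP => i; rewrite ffunE; apply/eqP; exact: Hx.
by rewrite /= (hid Hf).
Qed.

Lemma rect R : Inv R -> forall a b c e, R a c -> R b c -> R b e -> R a e.
Proof.
move=> HR a b c e H1 H2 H3.
have := HR 3 d hd (tri a b b) (tri c c e).
rewrite (hdM b a).1 (hdM c e).2; apply; apply: forall3;
  by rewrite ?tri_o0 ?tri_o1 ?tri_o2.
Qed.

Lemma pres_of_Inv (R : rel A) : Inv R -> clone_preserves C (rel2 R).
Proof.
move=> HR n f Hf r Hr; rewrite /rel2 !ffunE; apply: HR => // i; rewrite !ffunE.
exact: Hr.
Qed.

(* Baker-Pixley interpolation *)
Lemma BP n (F : op A n) :
  (forall x y, exists g, C n g /\ g x = F x /\ g y = F y) -> C n F.
Proof.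
move=> H.
have small : forall a b, exists g, C n g /\ forall z, z \in [:: a; b] -> g z = F z.
  move=> a b; have [g [Hg [Ha Hb]]] := H a b; exists g; split=> // z.
  by rewrite !inE => /orP[] /eqP ->.
have key : forall k (s : seq {ffun 'I_n -> A}), size s <= k ->
    exists g, C n g /\ forall z, z \in s -> g z = F z.
  elim=> [|k IH] s Hs.
    case: s Hs => // _; have [g [Hg _]] := small [ffun _ => o0] [ffun _ => o0].
    by exists g.
  case: s Hs => [|a [|b [|c t]]] Hs.
  - have [g [Hg _]] := small [ffun _ => o0] [ffun _ => o0]; by exists g.
  - have [g [Hg Hg']] := small a a; exists g; split=> // z Hz; apply: Hg'.
    by move: Hz; rewrite !inE => ->.
  - exact: small.
  rewrite /= !ltnS in Hs.
  have [g1 [Hg1 E1]] := IH [:: b, c & t] Hs.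
  have [g2 [Hg2 E2]] := IH [:: a, c & t] Hs.
  have [g3 [Hg3 E3]] := IH [:: a, b & t] Hs.
  pose G := fun i : A => if i == o0 then g1 else if i == o1 then g2 else g3.
  exists (comp_op m G); split.
    apply: hC.2 => // i; move: i; apply: forall3; by rewrite /G.
  move=> z Hz.
  have -> : comp_op m G z = m (tri (g1 z) (g2 z) (g3 z)).
    rewrite /comp_op ffunE; apply: congr1; apply/ffunP; apply: forall3;
      by rewrite !ffunE /G.
  move: Hz; rewrite !inE => /orP[/eqP Ha|/orP[/eqP Hb|/orP[/eqP Hc|Ht]]].
  - have h2 : g2 z = F z by apply: E2; rewrite Ha !inE eqxx.
    have h3 : g3 z = F z by apply: E3; rewrite Ha !inE eqxx.
    by rewrite h2 h3; case: (hmM (g1 z) (F z)) => ->.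
  - have h1 : g1 z = F z by apply: E1; rewrite Hb !inE eqxx.
    have h3 : g3 z = F z by apply: E3; rewrite Hb !inE eqxx orbT.
    by rewrite h1 h3; case: (hmM (g2 z) (F z)) => _ ->.
  - have h1 : g1 z = F z by apply: E1; rewrite Hc !inE eqxx orbT.
    have h2 : g2 z = F z by apply: E2; rewrite Hc !inE eqxx orbT.
    by rewrite h1 h2; case: (hmM (g3 z) (F z)) => _ _ ->.
  - have h1 : g1 z = F z by apply: E1; rewrite !inE Ht !orbT.
    have h2 : g2 z = F z by apply: E2; rewrite !inE Ht !orbT.
    have h3 : g3 z = F z by apply: E3; rewrite !inE Ht !orbT.
    by rewrite h1 h2 h3; case: (hmM (F z) (F z)) => ->.
have [g [Hg Hgs]] := key _ (enum {: {ffun 'I_n -> A}}) (leqnn _).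
suff -> : F = g by [].
by apply/ffunP => z; rewrite Hgs // mem_enum.
Qed.

Definition Rxy n (x y : {ffun 'I_n -> A}) : rel A :=
  fun a b => `[< exists g, C n g /\ g x = a /\ g y = b >].

Lemma Inv_Rxy n (x y : {ffun 'I_n -> A}) : Inv (Rxy x y).
Proof.
move=> k f Hf u w Huw.
pose G := fun j => proj1_sig (cid (elimT (asboolP _) (Huw j))).
have HG : forall j, C n (G j) /\ G j x = u j /\ G j y = w j.
  by move=> j; rewrite /G; case: (cid _).
apply/asboolP; exists (comp_op f G); split; first by apply: hC.2 => // j; case: (HG j).
split; rewrite /comp_op ffunE; apply: congr1; apply/ffunP => j; rewrite ffunE;
  by case: (HG j) => _ [].
Qed.

Lemma Rxy_col n (x y : {ffun 'I_n -> A}) i : Rxy x y (x i) (y i).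
Proof.
apply/asboolP; exists (proj_op A i); split; first exact: hC.1.
by rewrite /proj_op !ffunE.
Qed.

Lemma BP_Inv n (F : op A n) :
  (forall R, Inv R -> forall x y : {ffun 'I_n -> A}, (forall i, R (x i) (y i)) -> R (F x) (F y)) -> C n F.
Proof.
move=> H; apply: BP => x y.
have := H _ (@Inv_Rxy n x y) x y (@Rxy_col n x y).
by move/asboolP => [g [Hg [E1 E2]]]; exists g.
Qed.

End Clone.

Definition Un (r : A) : pred A := fun z => z != r.
Definition taurel (s : A) : rel A := fun a b => b == tau s a.
Definition murel (t : A) : rel A := fun a b => (a == t) == (b == t).
Definition phirel : rel A := fun a b => val b == (val a).+1 %% 3.
Definition cyc (z : A) : A := if z == o0 then o1 else if z == o1 then o2 else o0.

Definition bijpair (R : rel A) (r r' : A) : Prop :=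
  [/\ forall a b, R a b -> (a != r) && (b != r'),
      forall a, a != r -> exists b, R a b,
      forall b, b != r' -> exists a, R a b,
      forall a b b', R a b -> R a b' -> b = b'
    & forall a a' b, R a b -> R a' b -> a = a'].

Definition LOK (C : opset A) (L : A -> A) :=
  (forall r, Inv1 C (Un r) -> L r != r) /\
  (forall R r r', Inv C R -> bijpair R r r' -> R (L r) (L r')).

Lemma perm3 (g : A -> A) : injective g ->
  [\/ forall z, g z = z, exists s, forall z, g z = tau s z |
      (forall z, g z = cyc z) \/ (forall z, g z = cyc (cyc z))].
Proof.
move=> ginj.
case: (A_cases (g o0)) => G0; case: (A_cases (g o1)) => G1; case: (A_cases (g o2)) => G2;
first [ by have := @ginj o0 o1; rewrite G0 G1 => /(_ erefl)
      | by have := @ginj o0 o2; rewrite G0 G2 => /(_ erefl)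
      | by have := @ginj o1 o2; rewrite G1 G2 => /(_ erefl)
      | by constructor 1; apply: forall3; rewrite ?G0 ?G1 ?G2
      | by constructor 2; exists o0; apply: forall3; rewrite ?G0 ?G1 ?G2
      | by constructor 2; exists o1; apply: forall3; rewrite ?G0 ?G1 ?G2
      | by constructor 2; exists o2; apply: forall3; rewrite ?G0 ?G1 ?G2
      | by constructor 3; left; apply: forall3; rewrite ?G0 ?G1 ?G2
      | by constructor 3; right; apply: forall3; rewrite ?G0 ?G1 ?G2 ].
Qed.

Section Main.
Unset Implicit Arguments.
Variable C : opset A.
Set Implicit Arguments.
Hypothesis hC : is_clone C.
Hypothesis hid : idempotent_clone C.
Variable d : op A 3.
Hypothesis hd : C 3 d.
Hypothesis hdM : forall x y : A, d (tri y x x) = y /\ d (tri x x y) = y.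
Hypothesis hmu : forall t, ~ Inv C (murel t).
Hypothesis hphi : ~ Inv C phirel.
Variables (L : A -> A) (c : A).
Hypothesis HLtau : forall s, Inv C (taurel s) -> forall r, L (tau s r) = tau s (L r).
Hypothesis Hctau : forall s, Inv C (taurel s) -> tau s c = c.
Variables (n : nat) (h : op B n) (i0 : 'I_n).
Hypothesis hh : idem2 h.
Hypothesis hsd : sd h \/ LOK C L.

Lemma st_cases (x : {ffun 'I_n -> A}) q :
  [\/ h [ffun i => b2o (x i == q)] = z2 /\ h [ffun i => b2o (x i != q)] = u2,
      h [ffun i => b2o (x i == q)] = u2 /\ h [ffun i => b2o (x i != q)] = z2 |
      LOK C L /\ h [ffun i => b2o (x i == q)] = h [ffun i => b2o (x i != q)]].
Proof.
have Hst : sd h -> h [ffun i => b2o (x i == q)] != h [ffun i => b2o (x i != q)].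
  move=> Hs; have := Hs [ffun i => x i == q].
  have -> : [ffun i => b2o ([ffun i => x i == q] i)] = [ffun i => b2o (x i == q)].
    by apply/ffunP => i; rewrite !ffunE.
  have -> : [ffun i => b2o (~~ [ffun i => x i == q] i)] = [ffun i => b2o (x i != q)].
    by apply/ffunP => i; rewrite !ffunE.
  by [].
move: Hst; case: (B_cases (h [ffun i => b2o (x i == q)])) => ->;
  case: (B_cases (h [ffun i => b2o (x i != q)])) => -> Hst.
- by constructor 3; split => //; case: hsd => [/Hst|//].
- by constructor 1.
- by constructor 2.
- by constructor 3; split => //; case: hsd => [/Hst|//].
Qed.

Lemma vec_const (x : {ffun 'I_n -> A}) a : (forall i, x i = a) ->
  [ffun j => h [ffun i => E (x i) j]] = E a.
Proof.
move=> Hc; apply/ffunP => j; rewrite [LHS]ffunE.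
have -> : [ffun i => E (x i) j] = [ffun _ => E a j].
  by apply/ffunP => i; rewrite [LHS]ffunE [RHS]ffunE Hc.
exact: hh.
Qed.

Lemma zeta_eq2 (x : {ffun 'I_n -> A}) p q : p != q ->
  (forall i, (x i == p) || (x i == q)) ->
  zeta L c h x = dec L c (sel p q (h [ffun i => b2o (x i == q)])
                                  (h [ffun i => b2o (x i != q)])).
Proof. by move=> Hpq Hx; rewrite /zeta ffunE (zeta_two hh Hpq Hx). Qed.

Lemma zeta_un U : Inv1 C U ->
  forall x : {ffun 'I_n -> A}, (forall i, U (x i)) -> U (zeta L c h x).
Proof.
move=> HU x Hx.
case: (pselect (forall i, x i = x i0)) => [Hc|/existsNP [i1 Hi1]].
  by rewrite /zeta ffunE (vec_const Hc) dec_E.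
have Hpq : x i0 != x i1 by apply/eqP => H; apply: Hi1; rewrite H.
have /andP [Hrp Hrq] := third_neq Hpq.
case: (boolP (U (third (x i0) (x i1)))) => Ur.
  by case/or3P: (third_cases Hpq (zeta L c h x)) => /eqP ->.
have UU : U =1 Un (third (x i0) (x i1)).
  move=> z; rewrite /Un; case/or3P: (third_cases Hpq z) => /eqP ->.
  - by rewrite eq_sym Hrp; apply: Hx.
  - by rewrite eq_sym Hrq; apply: Hx.
  - by rewrite eqxx (negbTE Ur).
have Hx2 : forall i, (x i == x i0) || (x i == x i1).
  move=> i; have := Hx i; rewrite UU /Un.
  by case/or3P: (third_cases Hpq (x i)) => [->|->|/eqP ->]; rewrite ?orbT ?eqxx.
rewrite (zeta_eq2 Hpq Hx2) UU /Un.
have [S1 S2 S3 S4] := sel_pq Hpq.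
case: (st_cases x (x i1)) => [[-> ->]|[-> ->]|[HL ->]].
- by rewrite S1 dec_E eq_sym.
- by rewrite S2 dec_E eq_sym.
- case: (B_cases (h [ffun i => b2o (x i != x i1)])) => ->;
    rewrite ?S3 ?S4 ?dec_M ?dec_J; apply: HL.1; exact: Inv1_ext HU UU.
Qed.

Lemma zeta_prod R : Inv C R ->
  (forall a a', [exists b, R a b] -> [exists b, R a' b] -> [exists b, R a b && R a' b]) ->
  forall x y : {ffun 'I_n -> A}, (forall i, R (x i) (y i)) ->
  R (zeta L c h x) (zeta L c h y).
Proof.
move=> HR HK x y Hxy.
have H1 : [exists b, R (zeta L c h x) b].
  apply: (zeta_un (Inv1_pr1 HR)) => i; apply/existsP; exists (y i); exact: Hxy.
have H2 : [exists a, R a (zeta L c h y)].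
  apply: (zeta_un (Inv1_pr2 HR)) => i; apply/existsP; exists (x i); exact: Hxy.
case/existsP: H2 => a Ha.
have Ba : [exists b, R a b] by apply/existsP; exists (zeta L c h y).
have /existsP [b' /andP [Hb1 Hb2]] := HK _ _ H1 Ba.
exact: (rect hd hdM HR Hb1 Hb2 Ha).
Qed.

Lemma inj_of R : Inv C R ->
  ~ (forall a a', [exists b, R a b] -> [exists b, R a' b] -> [exists b, R a b && R a' b]) ->
  forall a a' b, R a b -> R a' b -> a = a'.
Proof.
move=> HR HK a a' b Hab Ha'b.
pose K := [rel u v | [exists w, R u w && R v w]].
have HKinv : Inv C K.
  by apply: Inv_ext (Inv_comp HR (Inv_conv HR)) _ => u v.
have Ksym : forall u v, K u v -> K v u.
  by move=> u v /existsP [w /andP [H1 H2]]; apply/existsP; exists w; rewrite H1 H2.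
have Ktr : forall u v w, K u v -> K v w -> K u w.
  move=> u v w /existsP [b1 /andP [H1 H2]] /existsP [b2 /andP [H3 H4]].
  by apply/existsP; exists b2; rewrite H4 (rect hd hdM HR H1 H2 H3).
have Krefl : forall u, [exists b, R u b] -> K u u.
  by move=> u /existsP [w Hw]; apply/existsP; exists w; rewrite Hw.
move/existsNP: HK => [a1 /existsNP [a2 /not_implyP [B1 /not_implyP [B2 NK]]]].
case: (eqVneq a a') => // Hne; exfalso.
have Kaa' : K a a' by apply/existsP; exists b; rewrite Hab Ha'b.
have /andP [Hta Hta'] := third_neq Hne.
have Ba : [exists b, R a b] by apply/existsP; exists b.
have Ba' : [exists b, R a' b] by apply/existsP; exists b.
case: (boolP [exists b, R (third a a') b]) => Bt.
- case: (boolP (K (third a a') a)) => Kta.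
    have Kall : forall z, K z a.
      move=> z; case/or3P: (third_cases Hne z) => /eqP ->; [exact: Krefl|exact: Ksym|exact: Kta].
    by apply: NK; exact: (Ktr _ _ _ (Kall a1) (Ksym _ _ (Kall a2))).
  have Kta' : ~~ K (third a a') a'.
    by apply: contra Kta => H; exact: (Ktr _ _ _ H (Ksym _ _ Kaa')).
  have Kat : ~~ K a (third a a') by apply: contra Kta; exact: Ksym.
  have Ka't : ~~ K a' (third a a') by apply: contra Kta'; exact: Ksym.
  have at' : (a == third a a') = false by rewrite eq_sym (negbTE Hta).
  have a't : (a' == third a a') = false by rewrite eq_sym (negbTE Hta').
  apply: (@hmu (third a a')); apply: Inv_ext HKinv _ => u v; rewrite /murel.
  case/or3P: (third_cases Hne u) => /eqP ->; case/or3P: (third_cases Hne v) => /eqP ->;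
  rewrite ?at' ?a't ?eqxx /=;
  first [ exact: (Krefl _ Ba) | exact: (Krefl _ Ba') | exact: (Krefl _ Bt)
        | exact: Kaa' | exact: (Ksym _ _ Kaa') | exact: (negbTE Kta)
        | exact: (negbTE Kta') | exact: (negbTE Kat) | exact: (negbTE Ka't) ].
- have Hin : forall z, [exists b, R z b] -> (z == a) || (z == a').
    move=> z Bz; case/or3P: (third_cases Hne z) => /eqP Ez; rewrite Ez ?eqxx ?orbT //.
    by move: Bt; rewrite -Ez Bz.
  case/orP: (Hin a1 B1) => /eqP E1; case/orP: (Hin a2 B2) => /eqP E2;
  apply: NK; rewrite E1 E2;
  first [ exact: (Krefl _ Ba) | exact: (Krefl _ Ba') | exact: Kaa' | exact: (Ksym _ _ Kaa') ].
Qed.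

Lemma zeta_bin R : Inv C R ->
  forall x y : {ffun 'I_n -> A}, (forall i, R (x i) (y i)) ->
  R (zeta L c h x) (zeta L c h y).
Proof.
move=> HR x y Hxy.
case: (pselect (forall a a', [exists b, R a b] -> [exists b, R a' b] ->
                 [exists b, R a b && R a' b])) => [HK|HK].
  exact: zeta_prod.
pose R' := [rel a b | R b a].
have HR' : Inv C R' := Inv_conv HR.
case: (pselect (forall a a', [exists b, R' a b] -> [exists b, R' a' b] ->
                 [exists b, R' a b && R' a' b])) => [HK'|HK'].
  exact: (zeta_prod HR' HK' (x:=y) (y:=x)).
have inj := inj_of HR HK.
have func : forall a b b', R a b -> R a b' -> b = b'.
  by move=> a b b' H1 H2; exact: (inj_of HR' HK' H1 H2).
move/existsNP: HK => [a1 /existsNP [a2 /not_implyP [B1 /not_implyP [B2 NK]]]].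
have H12 : a1 != a2.
  apply/eqP => E12; apply: NK; rewrite -E12.
  by case/existsP: B1 => w Hw; apply/existsP; exists w; rewrite Hw.
have /andP [Hr1 Hr2] := third_neq H12.
case/existsP: (B1) => b1 Hb1; case/existsP: (B2) => b2 Hb2.
have Hb12 : b1 != b2.
  by apply/eqP => E; move/eqP: H12; apply; apply: (inj _ _ b1 Hb1); rewrite E.
case: (boolP [exists b, R (third a1 a2) b]) => Br.
- pose g a := odflt a [pick b | R a b].
  have Btot : forall a, [exists b, R a b].
    move=> a; case/or3P: (third_cases H12 a) => /eqP -> //.
  have Hg : forall a, R a (g a).
    move=> a; rewrite /g; case: pickP => [b //|H].
    by case/existsP: (Btot a) => w; rewrite H.
  have Hgu : forall a b, R a b -> b = g a.
    by move=> a b H; apply: (func a) => //; apply: Hg.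
  have ginj : injective g.
    by move=> u v E; apply: (inj _ _ (g u) (Hg u)); rewrite E; apply: Hg.
  have Hy : y = [ffun i => g (x i)].
    by apply/ffunP => i; rewrite ffunE; apply: Hgu; apply: Hxy.
  have Rg : forall a b, R a b = (b == g a).
    by move=> a b; apply/idP/eqP => [/Hgu|->] //; apply: Hg.
  case: (perm3 ginj) => [Hid|[s Hs]|[Hc|Hc]].
  + have -> : y = x by rewrite Hy; apply/ffunP => i; rewrite ffunE Hid.
    by rewrite Rg Hid.
  + have Ht : Inv C (taurel s) by apply: Inv_ext HR _ => u v; rewrite Rg Hs.
    have -> : y = [ffun i => tau s (x i)].
      by rewrite Hy; apply/ffunP => i; rewrite !ffunE Hs.
    rewrite zeta_perm; first by rewrite Rg Hs.
    - exact: HLtau.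
    - exact: Hctau.
  + exfalso; apply: hphi; apply: Inv_ext HR _ => u v; rewrite Rg Hc.
    by move: u v; apply: forall3; apply: forall3.
  + exfalso; apply: hphi; apply: Inv_ext HR' _ => u v; rewrite /R' /= Rg Hc.
    by move: u v; apply: forall3; apply: forall3.
- have HB1 : forall a, [exists b, R a b] -> (a == a1) || (a == a2).
    move=> a Ba; case/or3P: (third_cases H12 a) => /eqP Ea; rewrite Ea ?eqxx ?orbT //.
    by move: Br; rewrite -Ea Ba.
  have Hx2 : forall i, (x i == a1) || (x i == a2).
    by move=> i; apply: HB1; apply/existsP; exists (y i); apply: Hxy.
  have Hyv : forall i, y i = if x i == a2 then b2 else b1.
    move=> i; case/orP: (Hx2 i) => /eqP Ex.
    + rewrite Ex (negbTE H12).
      by apply: (func a1) => //; rewrite -Ex; apply: Hxy.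
    + rewrite Ex eqxx; apply: (func a2) => //; rewrite -Ex; apply: Hxy.
  have Hy2 : forall i, (y i == b1) || (y i == b2).
    by move=> i; rewrite Hyv; case: ifP; rewrite eqxx ?orbT.
  have Hyq : forall i, (y i == b2) = (x i == a2).
    by move=> i; rewrite Hyv; case: ifP; rewrite ?eqxx // (negbTE Hb12).
  rewrite (zeta_eq2 H12 Hx2) (zeta_eq2 Hb12 Hy2).
  have -> : [ffun i => b2o (y i == b2)] = [ffun i => b2o (x i == a2)].
    by apply/ffunP => i; rewrite !ffunE Hyq.
  have -> : [ffun i => b2o (y i != b2)] = [ffun i => b2o (x i != a2)].
    by apply/ffunP => i; rewrite !ffunE Hyq.
  have [S1 S2 S3 S4] := sel_pq H12; have [T1 T2 T3 T4] := sel_pq Hb12.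
  case: (st_cases x a2) => [[-> ->]|[-> ->]|[HL ->]].
  + by rewrite S1 T1 !dec_E.
  + by rewrite S2 T2 !dec_E.
  + have /andP [Hr'1 Hr'2] := third_neq Hb12.
    have Bp : bijpair R (third a1 a2) (third b1 b2).
      split.
      * move=> a b Rab.
        have Ba : [exists b, R a b] by apply/existsP; exists b.
        case/orP: (HB1 a Ba) => /eqP Ea; rewrite Ea in Rab *.
        - by rewrite (func _ _ _ Rab Hb1) eq_sym Hr1 eq_sym Hr'1.
        - by rewrite (func _ _ _ Rab Hb2) eq_sym Hr2 eq_sym Hr'2.
      * move=> a Ha; case/or3P: (third_cases H12 a) => /eqP Ea.
        - by exists b1; rewrite Ea.
        - by exists b2; rewrite Ea.
        - by rewrite Ea eqxx in Ha.
      * move=> b Hb; case/or3P: (third_cases Hb12 b) => /eqP Eb.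
        - by exists a1; rewrite Eb.
        - by exists a2; rewrite Eb.
        - by rewrite Eb eqxx in Hb.
      * exact: func.
      * exact: inj.
    case: (B_cases (h [ffun i => b2o (x i != a2)])) => ->;
      rewrite ?S3 ?T3 ?S4 ?T4 ?dec_M ?dec_J; exact: HL.2 _ _ _ HR Bp.
Qed.

End Main.

Definition swaprel (p q : A) : rel A :=
  fun a b => ((a == p) && (b == q)) || ((a == q) && (b == p)).

Definition relcomp (R S : rel A) : rel A := fun a c => [exists b, R a b && S b c].

Lemma bijpair_conv R r r' : bijpair R r r' -> bijpair [rel a b | R b a] r' r.
Proof.
case=> H1 H2 H3 H4 H5; split=> /=.
- by move=> a b /H1 /andP [X Y]; rewrite X Y.
- by move=> a /H3.
- by move=> b /H2.
- by move=> a b b' Hb Hb'; apply: (H5 _ _ a).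
- by move=> a a' b Ha Ha'; apply: (H4 b).
Qed.

Lemma bijpair_comp R S r r' r'' : bijpair R r r' -> bijpair S r' r'' ->
  bijpair (relcomp R S) r r''.
Proof.
case=> R1 R2 R3 R4 R5 [S1 S2 S3 S4 S5]; split.
- move=> a b /existsP [m /andP [Ham Hmb]].
  by case/andP: (R1 _ _ Ham) => -> _; case/andP: (S1 _ _ Hmb) => _ ->.
- move=> a /R2 [m Ham]; case/andP: (R1 _ _ Ham) => _ /S2 [b Hmb].
  by exists b; apply/existsP; exists m; rewrite Ham Hmb.
- move=> b /S3 [m Hmb]; case/andP: (S1 _ _ Hmb) => /R3 [a Ham] _.
  by exists a; apply/existsP; exists m; rewrite Ham Hmb.
- move=> a b b' /existsP [m /andP [H1 H2]] /existsP [m' /andP [H1' H2']].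
  by rewrite (R4 _ _ _ H1 H1') in H2; apply: (S4 m').
- move=> a a' b /existsP [m /andP [H1 H2]] /existsP [m' /andP [H1' H2']].
  by rewrite (S5 _ _ _ H2 H2') in H1; apply: (R5 _ _ m').
Qed.

Lemma two_elt (r x y z : A) : x != r -> y != r -> z != r -> x != z -> y != z -> x = y.
Proof. by move: r x y z; do 4! apply: forall3. Qed.

Section Final.
Unset Implicit Arguments.
Variable C : opset A.
Set Implicit Arguments.
Hypothesis hC : is_clone C.
Hypothesis hid : idempotent_clone C.
Variable d : op A 3.
Hypothesis hd : C 3 d.
Hypothesis hdM : forall x y : A, d (tri y x x) = y /\ d (tri x x y) = y.
Hypothesis hphi : ~ Inv C phirel.

Lemma Inv_relcomp R S : Inv C R -> Inv C S -> Inv C (relcomp R S).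
Proof. by move=> HR HS; apply: Inv_ext (Inv_comp HR HS) _ => a b. Qed.

Lemma tau_unique s s' : Inv C (taurel s) -> Inv C (taurel s') -> s = s'.
Proof.
move=> H1 H2.
have HT : Inv C [rel a c | c == tau s' (tau s a)].
  apply: Inv_ext (Inv_comp H1 H2) _ => a c /=.
  apply/existsP/eqP => [[b /andP [/eqP -> /eqP ->]] //|->].
  by exists (tau s a); rewrite /taurel !eqxx.
move: s s' H1 H2 HT; apply: forall3; apply: forall3 => // _ _ HT; exfalso; apply: hphi;
first [ (apply: Inv_ext HT _; apply: forall3; apply: forall3; by [])
      | (apply: Inv_ext (Inv_conv HT) _; apply: forall3; apply: forall3; by []) ].
Qed.

Definition cdef : A :=
  if `[< Inv C (taurel o0) >] then o0 else if `[< Inv C (taurel o1) >] then o1 else o2.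

Lemma cdef_fix s : Inv C (taurel s) -> tau s cdef = cdef.
Proof.
move=> Hs.
suff -> : cdef = s by rewrite /tau eqxx.
rewrite /cdef; case: (boolP `[< Inv C (taurel o0) >]) => [/asboolP H0|N0].
  exact: tau_unique H0 Hs.
case: (boolP `[< Inv C (taurel o1) >]) => [/asboolP H1|N1].
  exact: tau_unique H1 Hs.
case: (A_cases s) => Es; rewrite Es in Hs *.
- by rewrite (asboolT Hs) in N0.
- by rewrite (asboolT Hs) in N1.
- by [].
Qed.

Lemma Inv_tau_restr s r : Inv C (taurel s) -> Inv1 C (Un r) ->
  Inv C [rel a b | (a != r) && (b == tau s a)].
Proof.
move=> Ht Hr; apply: Inv_ext (Inv_comp (Inv1_diag Hr) Ht) _ => a b /=.
apply/existsP/andP => [[m /andP [/andP [/eqP <- Ha] Hb]] //|[Ha Hb]].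
by exists a; rewrite /Un /taurel eqxx Ha Hb.
Qed.

Lemma bijpair_tau s r : bijpair [rel a b | (a != r) && (b == tau s a)] r (tau s r).
Proof.
split=> /=.
- move=> a b /andP [Ha /eqP ->]; apply/andP; split=> //.
  by apply: contra Ha => /eqP /tau_inj ->.
- by move=> a Ha; exists (tau s a); apply/andP; split.
- move=> b Hb; exists (tau s b); apply/andP; split; last by rewrite tau_inv.
  by apply: contra Hb => /eqP <-; rewrite tau_inv.
- by move=> a b b' /andP [_ /eqP ->] /andP [_ /eqP ->].
- by move=> a a' b /andP [_ /eqP ->] /andP [_ /eqP /tau_inj].
Qed.

Lemma Inv1_of_bij R r r' : Inv C R -> bijpair R r r' -> Inv1 C (Un r) /\ Inv1 C (Un r').
Proof.
move=> HR [B1 B2 B3 _ _]; split.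
- apply: Inv1_ext (Inv1_pr1 HR) _ => a /=; rewrite /Un.
  apply/existsP/idP => [[b /B1 /andP [-> _]] //|/B2 [b Hb]]; by exists b.
- apply: Inv1_ext (Inv1_pr2 HR) _ => b /=; rewrite /Un.
  apply/existsP/idP => [[a /B1 /andP [_ ->]] //|/B3 [a Ha]]; by exists a.
Qed.

Lemma Inv1_tau s r : Inv C (taurel s) -> Inv1 C (Un r) -> Inv1 C (Un (tau s r)).
Proof.
move=> Ht Hr; exact: (Inv1_of_bij (Inv_tau_restr Ht Hr) (bijpair_tau s r)).2.
Qed.

Hypothesis noswap : forall p q, p != q -> ~ Inv C (swaprel p q).

Definition Iso r r' := exists R, Inv C R /\ bijpair R r r'.

Lemma Iso_refl r : Inv1 C (Un r) -> Iso r r.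
Proof.
move=> Hr; exists [rel a b | (a == b) && Un r a]; split; first exact: Inv1_diag.
rewrite /Un; split=> /=.
- by move=> a b /andP [/eqP -> ->].
- by move=> a Ha; exists a; rewrite eqxx.
- by move=> b Hb; exists b; rewrite eqxx.
- by move=> a b b' /andP [/eqP <- _] /andP [/eqP <- _].
- by move=> a a' b /andP [/eqP -> _] /andP [/eqP -> _].
Qed.

Lemma Iso_sym r r' : Iso r r' -> Iso r' r.
Proof.
by case=> R [HR Hb]; exists [rel a b | R b a]; split; [exact: Inv_conv|exact: bijpair_conv].
Qed.

Lemma Iso_trans r r' r'' : Iso r r' -> Iso r' r'' -> Iso r r''.
Proof.
case=> R [HR Hb] [S [HS Hc]]; exists (relcomp R S); split.
- exact: Inv_relcomp.
- exact: bijpair_comp Hb Hc.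
Qed.

Lemma bij_sub R R' r r' : Inv C R -> Inv C R' -> bijpair R r r' -> bijpair R' r r' ->
  forall a b, R a b -> R' a b.
Proof.
move=> HR HR' [R1 R2 R3 R4 R5] [S1 S2 S3 S4 S5] a b Rab.
apply/negPn/negP => NR'.
have /andP [Har Hbr] := R1 _ _ Rab.
have [b'' Hb''] := S2 _ Har.
have [a' Ha'] := S3 _ Hbr.
have Haa' : a != a' by apply: contraNneq NR' => ->.
have Hbb'' : b != b'' by apply: contraNneq NR' => ->.
have /andP [Ha'r _] := S1 _ _ Ha'.
have /andP [_ Hb''r] := S1 _ _ Hb''.
have [m Hm] := R2 _ Ha'r.
have /andP [_ Hmr] := R1 _ _ Hm.
have Hmb : m != b.
  by apply/eqP => E; move/eqP: Haa'; apply; apply: (R5 _ _ b Rab); rewrite -E.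
have Em : m = b'' by apply: (two_elt (r:=r') (z:=b)); rewrite // eq_sym.
rewrite Em in Hm.
apply: (noswap Haa').
have HT : Inv C (relcomp R (fun u v => R' v u)).
  by apply: Inv_relcomp => //; apply: Inv_ext (Inv_conv HR') _.
have /andP [T1 T2] := third_neq Haa'.
have Hr3 : forall u, [|| u == a, u == a' | u == r].
  move=> u; case/or3P: (third_cases Haa' u) => [->|->|/eqP ->]; rewrite ?orbT //.
  have Hra : r != a by rewrite eq_sym.
  have Hra' : r != a' by rewrite eq_sym.
  have Ha'a : a' != a by rewrite eq_sym.
  by rewrite -(@two_elt a r (third a a') a' Hra T1 Ha'a Hra' T2) eqxx !orbT.
have Taa' : [exists u, R a u && R' a' u] by apply/existsP; exists b; rewrite Rab Ha'.
have Ta'a : [exists u, R a' u && R' a u] by apply/existsP; exists b''; rewrite Hm Hb''.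
have NTaa : ~~ [exists u, R a u && R' a u].
  by apply/existsP => -[u /andP [H1 H2]]; rewrite -(R4 _ _ _ Rab H1) in H2; rewrite H2 in NR'.
have NTa'a' : ~~ [exists u, R a' u && R' a' u].
  apply/existsP => -[u /andP [H1 H2]]; rewrite -(R4 _ _ _ Hm H1) in H2.
  by move/eqP: Hbb''; apply; apply: (S4 a').
have NTr1 : forall w, ~~ [exists u, R r u && R' w u].
  by move=> w; apply/existsP => -[u /andP [H1 _]]; have := R1 _ _ H1; rewrite eqxx.
have NTr2 : forall z, ~~ [exists u, R z u && R' r u].
  by move=> z; apply/existsP => -[u /andP [_ H2]]; have := S1 _ _ H2; rewrite eqxx.
have Eaa' : (a == a') = false by apply/negbTE.
have Ea'a : (a' == a) = false by rewrite eq_sym.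
have Era : (r == a) = false by rewrite eq_sym; apply/negbTE.
have Era' : (r == a') = false by rewrite eq_sym; apply/negbTE.
apply: Inv_ext HT _ => z w; rewrite /relcomp /swaprel /=.
case/or3P: (Hr3 z) => /eqP ->; case/or3P: (Hr3 w) => /eqP ->;
  rewrite ?eqxx ?Eaa' ?Ea'a ?Era ?Era' /=;
  first [ exact: Taa' | exact: Ta'a | exact: (negbTE NTaa) | exact: (negbTE NTa'a')
        | exact: (negbTE (NTr1 _)) | exact: (negbTE (NTr2 _)) ].
Qed.

Lemma bij_eq R R' r r' : Inv C R -> Inv C R' -> bijpair R r r' -> bijpair R' r r' ->
  R =2 R'.
Proof.
move=> HR HR' B B' a b; apply/idP/idP; [exact: bij_sub B B' a b|exact: bij_sub B' B a b].
Qed.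



Definition isoB r r' : bool := `[< Iso r r' >].
Definition r0 r : A := if isoB o0 r then o0 else if isoB o1 r then o1 else o2.
Definition Rsel r : rel A :=
  match pselect (Iso (r0 r) r) with
  | left H => proj1_sig (cid H)
  | right _ => fun _ _ => false
  end.
Definition Lpre r : A := odflt r [pick b | Rsel r (elt (r0 r)) b].
Definition Ldef r : A := if `[< Inv1 C (Un r) >] then Lpre r else cdef.

Lemma r0_iso r : Inv1 C (Un r) -> Iso (r0 r) r.
Proof.
move=> Hr; have Hrr := Iso_refl Hr; rewrite /r0 /isoB.
case: (boolP `[< Iso o0 r >]) => [/asboolP //|N0].
case: (boolP `[< Iso o1 r >]) => [/asboolP //|N1].
case: (A_cases r) => Er; rewrite Er in Hrr N0 N1 *.
- by rewrite (asboolT Hrr) in N0.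
- by rewrite (asboolT Hrr) in N1.
- by [].
Qed.

Lemma r0_eq r r' : Iso r r' -> r0 r = r0 r'.
Proof.
move=> H; have E : forall z, isoB z r = isoB z r'.
  move=> z; apply: asbool_equiv_eq; split => Hz;
    [exact: Iso_trans Hz H | exact: Iso_trans Hz (Iso_sym H)].
by rewrite /r0 !E.
Qed.

Lemma Rsel_spec r : Inv1 C (Un r) -> Inv C (Rsel r) /\ bijpair (Rsel r) (r0 r) r.
Proof.
move=> Hr; rewrite /Rsel; case: pselect => [H|H]; last by case: H; exact: r0_iso.
by case: (cid H).
Qed.

Lemma Lpre_spec r : Inv1 C (Un r) -> Rsel r (elt (r0 r)) (Lpre r).
Proof.
move=> Hr; have [_ [_ B2 _ _ _]] := Rsel_spec Hr.
rewrite /Lpre; case: pickP => [b //|H].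
have [b Hb] := B2 _ (elt_neq (r0 r)); by rewrite H in Hb.
Qed.

Lemma Ldef_LOK : LOK C Ldef.
Proof.
split.
- move=> r Hr; rewrite /Ldef (asboolT Hr).
  have [_ [B1 _ _ _ _]] := Rsel_spec Hr.
  by case/andP: (B1 _ _ (Lpre_spec Hr)).
- move=> R r r' HR BR.
  have [Hr Hr'] := Inv1_of_bij HR BR.
  rewrite /Ldef (asboolT Hr) (asboolT Hr').
  have Hiso : Iso r r' by exists R.
  have [I1 B1] := Rsel_spec Hr; have [I2 B2] := Rsel_spec Hr'.
  have E0 := r0_eq Hiso.
  have Bc : bijpair (relcomp (Rsel r) R) (r0 r') r'.
    by rewrite -E0; exact: bijpair_comp B1 BR.
  have Ic : Inv C (relcomp (Rsel r) R) by apply: Inv_relcomp.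
  have := Lpre_spec Hr'; rewrite (bij_eq I2 Ic B2 Bc) -E0.
  case/existsP => u /andP [Hu1 Hu2].
  have [_ _ _ F _] := B1.
  by rewrite -(F _ _ _ Hu1 (Lpre_spec Hr)).
Qed.

Lemma Ldef_tau s : Inv C (taurel s) -> forall r, Ldef (tau s r) = tau s (Ldef r).
Proof.
move=> Ht r.
case: (boolP `[< Inv1 C (Un r) >]) => [/asboolP Hr|Nr].
  have := Ldef_LOK.2 _ _ _ (Inv_tau_restr Ht Hr) (bijpair_tau s r).
  by rewrite /=; case/andP => _ /eqP.
have Nr' : ~~ `[< Inv1 C (Un (tau s r)) >].
  apply: contra Nr => /asboolP H; apply/asboolP.
  by have := Inv1_tau Ht H; rewrite tau_inv.
by rewrite /Ldef (negbTE Nr) (negbTE Nr') cdef_fix.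
Qed.

End Final.

Definition xi (p q : A) n (f : op A n) : op B n :=
  [ffun b : {ffun 'I_n -> B} => b2o (f [ffun i => if b i == z2 then p else q] == q)].

Lemma xi_minor p q n r (sigma : 'I_n -> 'I_r) (f : op A n) :
  xi p q (minor sigma f) = minor sigma (xi p q f).
Proof.
apply/ffunP => b; rewrite !ffunE; congr (b2o (_ == q)); apply: congr1.
by apply/ffunP => i; rewrite !ffunE.
Qed.

Lemma xi_I2 (C : opset A) p q n (f : op A n) : idempotent_clone C -> p != q -> C n f ->
  @I2 n (xi p q f).
Proof.
move=> hid Hpq Hf; rewrite /I2 /=; split; [|split => //].
- move=> r Hr; rewrite /const2 /rel1 !ffunE.
  have -> : [ffun i => if [ffun j => r j ord0] i == z2 then p else q] = [ffun _ => p].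
    apply/ffunP => i; rewrite !ffunE.
    have := Hr i; rewrite /const2 /rel1 => H.
    by have -> : r i ord0 = z2 by apply: val_inj; apply/eqP.
  by rewrite (hid _ _ Hf) (negbTE Hpq).
- move=> r Hr; rewrite /const2 /rel1 !ffunE.
  have -> : [ffun i => if [ffun j => r j ord0] i == z2 then p else q] = [ffun _ => q].
    apply/ffunP => i; rewrite !ffunE.
    have := Hr i; rewrite /const2 /rel1 => H.
    by have -> : r i ord0 = u2 by apply: val_inj; apply/eqP.
  by rewrite (hid _ _ Hf) eqxx.
Qed.

Lemma xi_C2 (C : opset A) p q n (f : op A n) : idempotent_clone C -> p != q ->
  Inv C (swaprel p q) -> C n f -> @C2 n (xi p q f).
Proof.
move=> hid Hpq Hsw Hf; rewrite /C2 /=; split; last exact: (xi_I2 hid Hpq Hf).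
move=> r Hr; rewrite /neq2 /rel2 !ffunE.
have key : swaprel p q (f [ffun i => if r i ord0 == z2 then p else q])
                         (f [ffun i => if r i ord_max == z2 then p else q]).
  apply: Hsw => // i; rewrite !ffunE; have := Hr i; rewrite /neq2 /rel2.
  case: (B_cases (r i ord0)) => ->; case: (B_cases (r i ord_max)) => ->; rewrite //=;
  by rewrite /swaprel !eqxx ?orbT.
have E0 : [ffun i => if [ffun j => r j ord0] i == z2 then p else q] =
          [ffun i => if r i ord0 == z2 then p else q] by apply/ffunP => i; rewrite !ffunE.
have E1 : [ffun i => if [ffun j => r j ord_max] i == z2 then p else q] =
          [ffun i => if r i ord_max == z2 then p else q] by apply/ffunP => i; rewrite !ffunE.
rewrite E0 E1.
case/orP: key => [/andP [/eqP -> /eqP ->]|/andP [/eqP -> /eqP ->]].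
- by rewrite eqxx (negbTE Hpq).
- by rewrite eqxx (negbTE Hpq).
Qed.

Lemma I2_idem n (h : op B n) : @I2 n h -> idem2 h.
Proof.
case=> H0 [H1 _] b.
case: (B_cases b) => ->.
- have P0 : forall j : 'I_n, const2 0 ([ffun _ => z2] : {ffun 'I_1 -> B}).
    by move=> j; rewrite /const2 /rel1 ffunE.
  have := H0 (fun _ => [ffun _ => z2]) P0.
  rewrite /const2 /rel1 !ffunE => /eqP H; apply: val_inj; exact: H.
- have P1 : forall j : 'I_n, const2 1 ([ffun _ => u2] : {ffun 'I_1 -> B}).
    by move=> j; rewrite /const2 /rel1 ffunE.
  have := H1 (fun _ => [ffun _ => u2]) P1.
  rewrite /const2 /rel1 !ffunE => /eqP H; apply: val_inj; exact: H.
Qed.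

Lemma I2_pos n (h : op B n) : @I2 n h -> 0 < n.
Proof.
case: n h => // h [H0 [H1 _]]; exfalso.
have := H0 (fun _ => [ffun _ => z2]) (fun j => match j with Ordinal _ p => False_ind _ (notF p) end).
have := H1 (fun _ => [ffun _ => u2]) (fun j => match j with Ordinal _ p => False_ind _ (notF p) end).
rewrite /const2 /rel1 !ffunE.
have -> : [ffun j : 'I_0 => u2] = [ffun j => z2].
  by apply/ffunP => -[].
by move=> /eqP ->.
Qed.

Lemma C2_sd n (h : op B n) : @C2 n h -> sd h.
Proof.
case=> Hn _ b.
have := Hn (fun j => [ffun l : 'I_2 => if l == ord0 then b2o (b j) else b2o (~~ b j)]).
rewrite /neq2 /rel2 !ffunE.
have -> : [ffun j => [ffun l : 'I_2 => if l == ord0 then b2o (b j) else b2o (~~ b j)] ord0]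
          = [ffun i => b2o (b i)] by apply/ffunP => j; rewrite !ffunE.
have -> : [ffun j => [ffun l : 'I_2 => if l == ord0 then b2o (b j) else b2o (~~ b j)] ord_max]
          = [ffun i => b2o (~~ b i)] by apply/ffunP => j; rewrite !ffunE.
apply=> j; rewrite !ffunE /=; by case: (b j).
Qed.

Theorem lemma6p2 (C : opset 'I_3) :
  is_clone C -> idempotent_clone C -> has_malcev C -> has_majority C ->
  ~ clone_preserves C (mu 0) -> ~ clone_preserves C (mu 1) ->
  ~ clone_preserves C (mu 2) -> ~ clone_preserves C phi ->
  minion_equiv C C2 \/ minion_equiv C I2.
Proof.
move=> hC hid [d [hd hdM]] [m [hm hmM]] N0 N1 N2 Nphi.
have hmu : forall t : A, ~ Inv C (murel t).
  apply: forall3 => Ht; [apply: N0|apply: N1|apply: N2]; exact: (pres_of_Inv Ht).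
have hphi : ~ Inv C phirel by move=> Ht; apply: Nphi; exact: (pres_of_Inv Ht).
have zin : forall (L : A -> A) c,
    (forall s, Inv C (taurel s) -> forall r, L (tau s r) = tau s (L r)) ->
    (forall s, Inv C (taurel s) -> tau s c = c) ->
    forall n (h : op B n), @I2 n h -> sd h \/ LOK C L -> C n (zeta L c h).
  move=> L c HL Hc n h HI hsd.
  have i0 : 'I_n := Ordinal (I2_pos HI).
  apply: (BP_Inv hC hm hmM) => R HR x y Hxy.
  exact: (zeta_bin hd hdM hmu hphi HL Hc i0 (I2_idem HI) hsd HR Hxy).
case: (pselect (exists p q, p != q /\ Inv C (swaprel p q))) => [[p [q [Hpq Hsw]]]|Hno].
- left; split.
  + exists (fun n f => xi p q f); split.
    * by move=> n f Hf; exact: (xi_C2 hid Hpq Hsw Hf).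
    * by move=> n r sigma f _; apply: xi_minor.
  + exists (fun n h => zeta (fun _ => cdef C) (cdef C) h); split.
    * move=> n h Hh; apply: zin.
      - by move=> s Hs r; rewrite (cdef_fix hphi Hs).
      - by move=> s Hs; rewrite (cdef_fix hphi Hs).
      - by case: Hh.
      - by left; apply: C2_sd.
    * by move=> n r sigma h _; apply: zeta_minor.
- right; have noswap : forall p q, p != q -> ~ Inv C (swaprel p q).
    by move=> p q Hpq Hs; apply: Hno; exists p, q.
  split.
  + exists (fun n f => xi o0 o1 f); split.
    * by move=> n f Hf; exact: (xi_I2 hid (isT : o0 != o1) Hf).
    * by move=> n r sigma f _; apply: xi_minor.
  + exists (fun n h => zeta (Ldef C) (cdef C) h); split.
    * move=> n h Hh; apply: zin => //.
      - exact: (Ldef_tau hphi noswap).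
      - by move=> s Hs; rewrite (cdef_fix hphi Hs).
      - by right; apply: Ldef_LOK.
    * by move=> n r sigma h _; apply: zeta_minor.
Qed.
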